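(* Let $a\in(0,\infty)$, let $\psi:[0,a]\to\mathbb{R}$ and let $0=a_0<a_1<\dots<a_M=a$ be a partition such that for each $m\in\{1,\dots,M\}$ the restriction of $\psi$ to $A_m=(a_{m-1},a_m)$ is continuous and strictly monotonic. Let $W\sim\mathcal{U}(0,a)$. Then the distribution function $F_{\psi(W)}$ of $\psi(W)$ is continuous. If, in addition, $\psi$ is continuous, then $F_{\psi(W)}$ is strictly monotonic on the range of $\psi$. *)

(* Defs.v *)
From HB Require Import structures.
From mathcomp Require Import all_boot all_order all_algebra.
From mathcomp Require Import all_classical all_reals all_analysis.
Set Implicit Arguments. Unset Strict Implicit. Unset Printing Implicit Defensive.
Import Order.TTheory GRing.Theory Num.Theory.
Import numFieldNormedType.Exports.
Local Open Scope classical_set_scope.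
Local Open Scope ring_scope.

(* Distribution function of psi(W), where W ~ U(0,a) is given by the
   library's uniform probability [uniform_prob] on [0,a] (the endpoints are
   null sets, so U[0,a] = U(0,a)). *)
Definition cdf_psi_unif (R : realType) (a : R) (ha : 0 < a) (psi : R -> R)
  (x : R) : R :=
  fine (uniform_prob ha [set w | psi w <= x]).

(* Main.v *)
Require Import Defs.
From HB Require Import structures.
From mathcomp Require Import all_boot all_order all_algebra.
From mathcomp Require Import all_classical all_reals all_analysis.
From mathcomp Require Import lra measurable_realfun.
Import Order.TTheory GRing.Theory Num.Theory.
Import numFieldNormedType.Exports.
Local Open Scope classical_set_scope.
Local Open Scope ring_scope.

Lemma arch (R : realType) (d : R) : 0 < d -> exists n : nat, n.+1%:R^-1 < d.
Proof.
move=> d0; exists (Num.truncn d^-1).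
move: (truncnS_gt d^-1); set k := Num.Def.trunc _ => h.
by rewrite -[d]invrK ltf_pV2 ?posrE ?invr_gt0 ?ltr0n.
Qed.

Lemma mono_cont (R : realType) (f : R -> R) x :
  {homo f : u v / u <= v} ->
  f (x + n.+1%:R^-1) @[n --> \oo] --> f x ->
  f (x - n.+1%:R^-1) @[n --> \oo] --> f x ->
  {for x, continuous f}.
Proof.
move=> fm /cvgrPdist_lt hr /cvgrPdist_lt hl.
apply/cvgrPdist_lt => e e0.
have [N1 _ H1] := hr e e0.
have [N2 _ H2] := hl e e0.
pose n := maxn N1 N2.
have /H1 h1 : (N1 <= n)%N by rewrite leq_maxl.
have /H2 h2 : (N2 <= n)%N by rewrite leq_maxr.
move: h1 h2 => /= h1 h2.
have d0 : 0 < n.+1%:R^-1 :> R by rewrite invr_gt0 ltr0n.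
apply/nbhs_ballP; exists n.+1%:R^-1 => // t; rewrite /ball_ /= => xt.
move: h1 h2 xt; rewrite !ltr_norml => /andP [h1 h1'] /andP [h2 h2'] /andP [xt xt'].
set d := n.+1%:R^-1 in d0 h1 h1' h2 h2' xt xt' *; clearbody d.
have [xt2|tx] := leP x t.
  have q : t <= x + d by lra.
  have := fm t (x + d) q; have := fm x t xt2.
  move=> a1 a2; apply/andP; split; lra.
have q : x - d <= t by lra.
have := fm (x - d) t q; have := fm t x (ltW tx).
move=> a1 a2; apply/andP; split; lra.
Qed.

Section PA1.
Context (R : realType) (a : R) (ha : 0 < a) (psi : R -> R)
  (M : nat) (ap : nat -> R).
Hypotheses (hM : (0 < M)%N) (h0 : ap 0%N = 0) (hMa : ap M = a)
  (hinc : forall m : nat, (m < M)%N -> ap m < ap m.+1)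
  (hcont : forall m : nat, (m < M)%N ->
     {within `]ap m, ap m.+1[, continuous psi})
  (hmono : forall m : nat, (m < M)%N ->
     {in `]ap m, ap m.+1[ &, {homo psi : x y / x < y}} \/
     {in `]ap m, ap m.+1[ &, {homo psi : x y / x < y >-> y < x}}).

Let D := [set w | exists2 m, (m < M)%N & ap m < w < ap m.+1].
Let Z := [set w | `[0, a]%classic w /\ ~ D w].

Lemma ap_mono m n : (m <= n)%N -> (n <= M)%N -> ap m <= ap n.
Proof.
move=> mn; elim: n mn => [|n IH]; first by rewrite leqn0 => /eqP ->.
rewrite leq_eqVlt => /orP [/eqP -> //|]; rewrite ltnS => mn nM.
apply: le_trans (IH mn (ltnW nM)) _; exact/ltW/hinc.
Qed.

Lemma ap_in m : (m <= M)%N -> 0 <= ap m <= a.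
Proof.
move=> mM; rewrite -h0 -hMa !ap_mono //.
Qed.

Lemma D_sub : D `<=` `[0, a]%classic.
Proof.
move=> w [m mM /andP [h1 h2]] /=; rewrite in_itv /=.
have := @ap_in m (ltnW mM); have := @ap_in m.+1 mM.
move=> /andP [? ?] /andP [? ?]; apply/andP; split; lra.
Qed.

Lemma cover w : `[0, a]%classic w -> D w \/ exists2 m, (m <= M)%N & w = ap m.
Proof.
rewrite /= in_itv /= => /andP [w0 wa].
suff: forall k, (k <= M)%N -> w <= ap k -> D w \/ exists2 m, (m <= M)%N & w = ap m.
  by move=> /(_ M (leqnn M)); rewrite hMa; apply.
elim => [_|k IH kM wk].
  rewrite h0 => w0'; right; exists 0%N => //; rewrite h0; apply/eqP.
  by rewrite eq_le w0 w0'.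
have [wk'|kw] := leP w (ap k); first exact: IH (ltnW kM) wk'.
have [->|ne] := eqVneq w (ap k.+1); first by right; exists k.+1.
left; exists k => //; by rewrite kw /= lt_neqAle ne wk.

Qed.

Lemma Z_countable : countable Z.
Proof.
apply: (@sub_countable _ _ _ (\bigcup_(m in [set m | (m <= M)%N]) [set ap m])).
  apply: subset_card_le => w [wa nD].
  case: (cover w wa) => // -[m mM ->]; exists m => //.
apply: bigcup_countable; first exact: countableP.
move=> m _; exact: countable1.
Qed.

Lemma cont_in m x : (m < M)%N -> ap m < x < ap m.+1 -> {for x, continuous psi}.
Proof.
move=> mM hx; have := hcont m mM.
rewrite continuous_open_subspace; last exact: interval_open.
by apply; rewrite inE /= in_itv /=.
Qed.

Lemma countU (A B : set R) : countable A -> countable B -> countable (A `|` B).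
Proof.
move=> cA cB; rewrite -bigcup2E; apply: bigcup_countable; first exact: countableP.
by move=> [|[|i]] _ //=; exact: countable0.
Qed.

Lemma meas_pre B : measurable B -> measurable (`[0, a]%classic `&` psi @^-1` B).
Proof.
move=> mB.
have -> : `[0, a]%classic `&` psi @^-1` B =
    (\bigcup_(m in [set m | (m < M)%N]) (`]ap m, ap m.+1[%classic `&` psi @^-1` B))
    `|` (Z `&` psi @^-1` B).
  apply/seteqP; split => w.
  - move=> [wa Bw]; case: (pselect (D w)).
    + by move=> [m mM hw]; left; exists m => //; split => //; rewrite /= in_itv /=.
    + by move=> nD; right; split.
  - case => [[m mM [hw Bw]] | [[wa _] Bw]]; split => //.
    by apply: D_sub; exists m => //; move: hw; rewrite /= in_itv /=.
apply: measurableU.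
  apply: bigcup_measurable => m mM.
  have oI : open (`]ap m, ap m.+1[%classic : set R) by exact: interval_open.
  have cI : {in (`]ap m, ap m.+1[%classic : set R), continuous psi}.
    by move=> x; rewrite inE /= in_itv /= => hx; exact: (cont_in m x mM hx).
  exact: (open_continuous_measurable_fun oI cI (measurable_itv _) mB).
apply: (@countable_measurable _ R); first exact: measurable_set1.
apply: sub_countable Z_countable; apply: subset_card_le => w [].
by [].
Qed.

Lemma Qcount A : countable A -> uniform_prob ha A = 0%E.
Proof.
move=> cA; apply: (@dominates_uniform_prob _ _ _ ha A).
- move=> A' mA' sA'; apply: countable_lebesgue_measure0.
  exact: sub_countable (subset_card_le sA') cA.
- apply: countable_measurable cA => t; exact: measurable_set1.
- by [].
Qed.

Lemma level_countable x : countable (`[0, a]%classic `&` psi @^-1` [set x]).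
Proof.
apply: (@sub_countable _ _ _ (Z `|` \bigcup_(m in [set m | (m < M)%N])
   (`]ap m, ap m.+1[%classic `&` psi @^-1` [set x]))).
  apply: subset_card_le => w [wa pw]; case: (pselect (D w)) => [[m mM hw]|nD].
    by right; exists m => //; split => //; rewrite /= in_itv /=.
  by left; split.
apply: countU; first exact: Z_countable.
apply: bigcup_countable; first exact: countableP.
move=> m mM.
case: (pselect (exists w0, (`]ap m, ap m.+1[%classic `&` psi @^-1` [set x]) w0)).
  move=> [w0 [Iw0 pw0]].
  apply: (sub_countable (subset_card_le _) (countable1 w0)).
  move=> w [Iw pw] /=; move: pw pw0 => /= pw pw0.
  have [lt|gt|//] := ltgtP w w0; case: (hmono m mM) => hm.
  - by have := hm w w0 Iw Iw0 lt; rewrite pw pw0 ltxx.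
  - by have := hm w w0 Iw Iw0 lt; rewrite pw pw0 ltxx.
  - by have := hm w0 w Iw0 Iw gt; rewrite pw pw0 ltxx.
  - by have := hm w0 w Iw0 Iw gt; rewrite pw pw0 ltxx.
move=> nT.
have -> : (`]ap m, ap m.+1[%classic `&` psi @^-1` [set x]) = set0.
  by apply/seteqP; split => // w Tw; apply: nT; exists w.
exact: countable0.
Qed.

Lemma FE x : cdf_psi_unif ha psi x =
  fine (uniform_prob ha (`[0, a]%classic `&` psi @^-1` `]-oo, x]%classic)).
Proof.
rewrite /cdf_psi_unif /uniform_prob integral_uniform_pdf setIC.
congr (fine (integral _ (_ `&` _) _)).
Qed.

Let P x := `[0, a]%classic `&` psi @^-1` `]-oo, x]%classic.

Lemma Pmeas x : measurable (P x).
Proof. exact: meas_pre (measurable_itv _). Qed.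

Lemma G_mono : {homo (fun x => fine (uniform_prob ha (P x))) : u v / u <= v}.
Proof.
move=> u v uv /=; rewrite fine_le ?fin_num_measure //; try exact: Pmeas.
apply: le_measure; rewrite ?inE; try exact: Pmeas.
move=> w [wa]; rewrite /= !in_itv /= => h; split => //; rewrite /= in_itv /=.
exact: le_trans h uv.
Qed.

Lemma G_right x : (fun n => fine (uniform_prob ha (P (x + n.+1%:R^-1)))) @ \oo
  --> fine (uniform_prob ha (P x)).
Proof.
apply: (@fine_cvg _ _ _ _ (fun n => uniform_prob ha (P (x + n.+1%:R^-1)))).
rewrite fineK ?fin_num_measure ?Pmeas //.
have -> : P x = \bigcap_n P (x + n.+1%:R^-1).
  apply/seteqP; split.
  - move=> w [wa]; rewrite /= in_itv /= => h n _; split => //; rewrite /= in_itv /=.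
    have : 0 < n.+1%:R^-1 :> R by rewrite invr_gt0 ltr0n.
    move: (n.+1%:R^-1) => d; lra.
  - move=> w h; have [wa _] := h 0%N I; split => //; rewrite /= in_itv /=.
    rewrite leNgt; apply/negP => xlt.
    have [n hn] := @arch R (psi w - x) ltac:(lra).
    have [_] := h n I; rewrite /= in_itv /=.
    move: hn; move: (n.+1%:R^-1) => d; lra.
apply: nonincreasing_cvg_mu.
- apply: (@le_lt_trans _ _ 1%E); [apply: probability_le1; exact: Pmeas | exact: ltry].
- move=> n; exact: Pmeas.
- apply: bigcap_measurableType => n _; exact: Pmeas.
- move=> m n mn; apply/subsetPset => w [wa]; rewrite /= !in_itv /= => h.
  split => //; rewrite /= in_itv /=; apply: le_trans h _.
  by rewrite lerD2l lef_pV2 ?posrE ?ltr0n // ler_nat.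
- exact: Pmeas.
Qed.

Lemma G_left x : (fun n => fine (uniform_prob ha (P (x - n.+1%:R^-1)))) @ \oo
  --> fine (uniform_prob ha (P x)).
Proof.
pose Pl := `[0, a]%classic `&` psi @^-1` `]-oo, x[%classic.
have mPl : measurable Pl by exact: meas_pre (measurable_itv _).
have eq1 : uniform_prob ha (P x) = uniform_prob ha Pl.
  have -> : P x = Pl `|` (`[0, a]%classic `&` psi @^-1` [set x]).
    apply/seteqP; split.
    - move=> w [wa]; rewrite /= in_itv /= le_eqVlt => /orP [/eqP e|l].
        by right.
      by left; split => //; rewrite /= in_itv /=.
    - move=> w [[wa]|[wa]]; rewrite /= ?in_itv /= => h; split => //;
        rewrite /= in_itv /=; [exact: ltW | by rewrite h].
  rewrite measureU //.
  - by rewrite -[RHS]adde0; congr (_ + _); exact: (Qcount _ (level_countable x)).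
  - exact: meas_pre (measurable_set1 x).
  - apply/seteqP; split => // w [[_ h1] [_ h2]]; move: h1 h2.
    by rewrite /= in_itv /= => h1 h2; rewrite h2 ltxx in h1.
rewrite eq1.
apply: (@fine_cvg _ _ _ _ (fun n => uniform_prob ha (P (x - n.+1%:R^-1)))).
rewrite fineK ?fin_num_measure //.
have -> : Pl = \bigcup_n P (x - n.+1%:R^-1).
  apply/seteqP; split.
  - move=> w [wa]; rewrite /= in_itv /= => h.
    have [n hn] := @arch R (x - psi w) ltac:(lra).
    exists n => //; split => //; rewrite /= in_itv /=.
    move: hn; move: (n.+1%:R^-1) => d; lra.
  - move=> w [n _ [wa]]; rewrite /= in_itv /= => h; split => //.
    rewrite /= in_itv /=.
    have : 0 < n.+1%:R^-1 :> R by rewrite invr_gt0 ltr0n.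
    move: h; move: (n.+1%:R^-1) => d; lra.
apply: nondecreasing_cvg_mu.
- move=> n; exact: Pmeas.
- apply: bigcup_measurable => n _; exact: Pmeas.
- move=> m n mn; apply/subsetPset => w [wa]; rewrite /= !in_itv /= => h.
  split => //; rewrite /= in_itv /=; apply: le_trans h _.
  by rewrite lerD2l lerN2 lef_pV2 ?posrE ?ltr0n // ler_nat.
Qed.

Lemma part1 : continuous (cdf_psi_unif ha psi).
Proof.
have -> : cdf_psi_unif ha psi = (fun x => fine (uniform_prob ha (P x))).
  by apply/funext => x; rewrite FE.
move=> x; apply: mono_cont; [exact: G_mono | exact: G_right | exact: G_left].
Qed.

Lemma find_ball (x y l h : R) :
  {within `[0, a]%classic, continuous psi} ->
  x < y -> 0 <= l -> l <= h -> h <= a ->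
  (psi l = x /\ psi h = y) \/ (psi l = y /\ psi h = x) ->
  exists c r, 0 < r /\ forall w, c - r < w < c + r ->
    (0 <= w <= a) /\ (x < psi w < y).
Proof.
move=> pc xy l0 lh ha' hlh.
have pclh : {within `[l, h]%classic, continuous psi}.
  apply: continuous_subspaceW pc => w /=; rewrite !in_itv /= => /andP [? ?].
  apply/andP; split; lra.
have mm : Num.min (psi l) (psi h) <= (x + y) / 2 <= Num.max (psi l) (psi h).
  case: hlh => -[-> ->].
  - rewrite (min_idPl (ltW xy)) (max_idPr (ltW xy)); apply/andP; split; lra.
  - rewrite (min_idPr (ltW xy)) (max_idPl (ltW xy)); apply/andP; split; lra.
have [c] := IVT lh pclh mm; rewrite in_itv /= => /andP [lc ch] pcm.
have lc' : l < c.
  rewrite lt_neqAle lc andbT; apply/eqP => el; move: pcm; rewrite -el.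
  case: hlh => -[-> _]; lra.
have ch' : c < h.
  rewrite lt_neqAle ch andbT; apply/eqP => eh; move: pcm; rewrite eh.
  case: hlh => -[_ ->]; lra.
have cc : {for c, continuous psi}.
  have : {within `]l, h[%classic, continuous psi}.
    apply: continuous_subspaceW pclh => w /=; rewrite !in_itv /= => /andP [? ?].
    apply/andP; split; lra.
  rewrite continuous_open_subspace; last exact: interval_open.
  by apply; rewrite inE /= in_itv /= lc' ch'.
have e0 : 0 < (y - x) / 2 by lra.
have [d d0 hd] := (nbhs_ballP _ _).1 ((cvgrPdist_lt _ _).1 cc _ e0).
pose r := Num.min d (Num.min (c - l) (h - c)).
have r1 : r <= d by rewrite /r ge_min lexx.
have r2 : r <= c - l by rewrite /r !ge_min lexx orbT.
have r3 : r <= h - c by rewrite /r !ge_min lexx !orbT.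
have r0 : 0 < r by rewrite /r !lt_min d0 !subr_gt0 lc' ch'.
exists c, r; split => // w /andP [w1 w2].
split; first by apply/andP; split; lra.
have : ball_ Num.Def.normr c d w by rewrite /ball_ /= ltr_norml; apply/andP; split; lra.
move=> /hd /=; rewrite ltr_norml pcm => /andP [? ?]; apply/andP; split; lra.
Qed.

Lemma part2 : {within `[0, a]%classic, continuous psi} ->
   forall x y : R, (psi @` `[0, a]%classic) x -> (psi @` `[0, a]%classic) y -> x < y ->
     cdf_psi_unif ha psi x < cdf_psi_unif ha psi y.
Proof.
move=> pc x y [u ua <-] [v va <-] xy; rewrite !FE.
move: ua va; rewrite /= !in_itv /= => /andP [u0 ua] /andP [v0 va].
have [c [r [r0 hI]]] : exists c r, 0 < r /\ forall w, c - r < w < c + r ->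
    (0 <= w <= a) /\ (psi u < psi w < psi v).
  have [uv|vu] := leP u v.
    exact: find_ball pc xy u0 uv va (or_introl (conj erefl erefl)).
  exact: find_ball pc xy v0 (ltW vu) ua (or_intror (conj erefl erefl)).
pose I := `]c - r, c + r[%classic.
have mI : measurable I by exact: measurable_itv.
have QI : (0 < uniform_prob ha I)%E.
  rewrite /uniform_prob (eq_integral (fun=> (a - 0)^-1%:E)); last first.
    move=> w; rewrite inE /I /= in_itv /= => /hI [/andP [w0 wa] _].
    by rewrite /uniform_pdf w0 wa.
  rewrite integral_cst // /I.
  set L := (X in (_ * X)%E).
  have -> : L = (2 * r)%:E.
    rewrite /L; etransitivity; first exact: lebesgue_measure_itv.
    rewrite /= lte_fin ifT; last lra.
    by rewrite -EFinD; congr EFin; lra.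
  rewrite -EFinM lte_fin; apply: mulr_gt0; first by rewrite subr0 invr_gt0.
  lra.
have dis : P (psi u) `&` I = set0.
  apply/seteqP; split => // w [[_]]; rewrite /= !in_itv /= => h1 /hI [_ /andP [h2 _]].
  lra.
have sub : P (psi u) `|` I `<=` P (psi v).
  move=> w [[wa]|]; rewrite /= ?in_itv /=.
    move=> h1; split => //; rewrite /= in_itv /=; lra.
  move=> /hI [w0 /andP [_ h2]]; split; rewrite /= in_itv //=; lra.
have le1 := le_measure (uniform_prob ha) (x := P (psi u) `|` I) (y := P (psi v)).
have fu : uniform_prob ha (P (psi u)) \is a fin_num by rewrite fin_num_measure //; exact: Pmeas.
have fv : uniform_prob ha (P (psi v)) \is a fin_num by rewrite fin_num_measure //; exact: Pmeas.
rewrite fine_lt //.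
apply: (@lt_le_trans _ _ (uniform_prob ha (P (psi u)) + uniform_prob ha I)%E).
  by rewrite lteDl.
rewrite -measureU //; last exact: Pmeas.
apply: le1 => //; rewrite inE.
- exact: measurableU (Pmeas _) mI.
- exact: Pmeas.
Qed.

End PA1.

Theorem propositionA1 (R : realType) (a : R) (ha : 0 < a) (psi : R -> R)
  (M : nat) (ap : nat -> R)
  (hM : (0 < M)%N) (h0 : ap 0%N = 0) (hMa : ap M = a)
  (hinc : forall m : nat, (m < M)%N -> ap m < ap m.+1)
  (hcont : forall m : nat, (m < M)%N ->
     {within `]ap m, ap m.+1[, continuous psi})
  (hmono : forall m : nat, (m < M)%N ->
     {in `]ap m, ap m.+1[ &, {homo psi : x y / x < y}} \/
     {in `]ap m, ap m.+1[ &, {homo psi : x y / x < y >-> y < x}}) :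
  continuous (cdf_psi_unif ha psi) /\
  ({within `[0, a], continuous psi} ->
   forall x y : R, (psi @` `[0, a]) x -> (psi @` `[0, a]) y -> x < y ->
     cdf_psi_unif ha psi x < cdf_psi_unif ha psi y).
Proof.
split.
  exact: (@part1 R a ha psi M ap h0 hMa hinc hcont hmono).
exact: (@part2 R a ha psi M ap h0 hMa hinc hcont).
Qed.
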